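(* Let $d$ and $k$ be integers with $2\le k\le d-2$ and let $\varepsilon\in(0,1)$. Set $r=\lceil k(d-k+1)/\varepsilon\rceil$. Then there is a positive integer $p_0=p_0(d,\varepsilon,k)$ such that for every prime $p\ge p_0$ there exists a subset $R\subseteq\mathbb{F}_p^{d-1}$ with $|R|\ge p^{d-k-\varepsilon}/2$ such that every $(k-1)$-dimensional affine subspace of $\mathbb{F}_p^{d-1}$ contains at most $r-1$ points of $R$.
   Context: $\mathbb{F}_p$ denotes the finite field with $p$ elements, and $\mathbb{F}_p^{d-1}$ the $(d-1)$-dimensional vector space over it; a $(k-1)$-dimensional affine subspace is a translate $x+L$ of a $(k-1)$-dimensional linear subspace $L$. *)

(* Defs.v *)
From HB Require Import structures.
From mathcomp Require Import all_boot all_order all_algebra.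
From mathcomp Require Import all_classical all_reals all_analysis.
Set Implicit Arguments. Unset Strict Implicit. Unset Printing Implicit Defensive.
Import Order.TTheory GRing.Theory Num.Theory.
Local Open Scope ring_scope.

Definition affine_sub (F : finFieldType) (n : nat) (x : 'rV[F]_n) (L : 'M[F]_n)
  : {set 'rV[F]_n} :=
  [set y : 'rV[F]_n | (y - x <= L)%MS].

Definition is_affine_subspace_dim (F : finFieldType) (n m : nat)
  (A : {set 'rV[F]_n}) : Prop :=
  exists (x : 'rV[F]_n) (L : 'M[F]_n), \rank L = m /\ A = affine_sub x L.

(* Main.v *)
Require Import Defs.
From HB Require Import structures.
From mathcomp Require Import all_boot all_order all_algebra.
From mathcomp Require Import all_classical all_reals all_analysis.
From mathcomp Require Import unstable zify.
From Stdlib Require Import Lia.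
From mathcomp Require Import lra.
From mathcomp Require Import eqtype ssrbool seq fintype finset.
Import Order.TTheory GRing.Theory Num.Theory.
Set Implicit Arguments. Unset Strict Implicit. Unset Printing Implicit Defensive.
Local Open Scope ring_scope.

Lemma card_rowspace (F : finFieldType) m n (A : 'M[F]_(m, n)) :
  (#|[set v : 'rV[F]_n | (v <= A)%MS]| <= #|F| ^ \rank A)%N.
Proof.
apply: (@leq_trans #|[set u *m row_base A | u : 'rV[F]_(\rank A)]|).
  apply: subset_leq_card; apply/subsetP => v; rewrite inE => vA.
  have : (v <= row_base A)%MS by rewrite eq_row_base.
  by case/submxP => u ->; apply: imset_f; rewrite inE.
apply: leq_trans (leq_imset_card _ _) _.
by apply: leq_trans (max_card _) _; rewrite card_mx mul1n.
Qed.

Definition cnt (F : finFieldType) n j D :=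
  #|[set M : 'M[F]_(j, n) | (\rank M <= D)%N]|.

Lemma col_bound (F : finFieldType) n j D (A : 'M[F]_(j, n)) :
  (#|[set v : 'rV[F]_n | (\rank (col_mx v A) <= D)%N]| <=
   (if (\rank A <= D)%N then #|F| ^ D else 0) +
   (if (\rank A < D)%N then #|F| ^ n else 0))%N.
Proof.
case: (ltnP (\rank A) D) => hAD.
  rewrite (ltnW hAD) /=; apply: leq_trans (leq_addl _ _).
  by apply: leq_trans (max_card _) _; rewrite card_mx mul1n.
case: (leqP (\rank A) D) => hAD2; last first.
  rewrite eq_card0 // => v; rewrite inE; apply/negbTE; rewrite -ltnNge.
  apply: leq_trans hAD2 _; rewrite -(addsmxE v A).
  exact: (mxrank_leqif_sup (addsmxSr v A)).1.
rewrite addn0.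
have -> : D = \rank A by apply/eqP; rewrite eqn_leq hAD hAD2.
apply: (leq_trans _ (card_rowspace A)); apply: subset_leq_card.
apply/subsetP => v; rewrite !inE => hv.
have := mxrank_leqif_sup (addsmxSr v A).
rewrite -(addsmxE v A) in hv.
move=> [h1 h2]; move: h2; rewrite eqn_leq h1 hv /= addsmx_sub.
by move=> /esym /andP [].
Qed.

Lemma sum_if_const (T : finType) (b : pred T) (c : nat) :
  (\sum_(x : T) (if b x then c else 0) = c * #|[set x | b x]|)%N.
Proof.
rewrite -big_mkcond /= -sum1dep_card big_distrr /=.
by apply: eq_bigr => x _; rewrite muln1.
Qed.

Lemma cnt_rec (F : finFieldType) n j D :
  (cnt F n (1 + j) D <= #|F| ^ D * cnt F n j D +
     #|F| ^ n * #|[set A : 'M[F]_(j, n) | (\rank A < D)%N]|)%N.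
Proof.
rewrite /cnt.
pose P := fun (u : 'M[F]_(j,n) * 'rV[F]_n) => (\rank (col_mx u.2 u.1) <= D)%N.
have step1 : (#|[set M : 'M[F]_(1 + j, n) | (\rank M <= D)%N]| <= #|[set u | P u]|)%N.
  have inj : injective (fun M : 'M[F]_(1 + j, n) => (dsubmx M, usubmx M)).
    by move=> M1 M2 [e1 e2]; rewrite -(vsubmxK M1) -(vsubmxK M2) e1 e2.
  rewrite -(card_imset _ inj); apply: subset_leq_card.
  apply/subsetP => u /imsetP [M]; rewrite inE => hM ->.
  by rewrite inE /P /= vsubmxK.
apply: leq_trans step1 _.
rewrite -sum1dep_card.
rewrite (eq_bigl (fun u => true && (\rank (col_mx u.2 u.1) <= D)%N)) //.
rewrite -(pair_big_dep xpredT (fun A v => (\rank (col_mx v A) <= D)%N) (fun _ _ => 1%N)) /=.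
rewrite (eq_bigr (fun A => #|[set v : 'rV[F]_n | (\rank (col_mx v A) <= D)%N]|)); last first.
  by move=> A _; rewrite sum1dep_card.
apply: leq_trans. apply: leq_sum => A _; exact: col_bound.
by rewrite big_split /= !sum_if_const.
Qed.

Lemma cnt_bound (F : finFieldType) n j D : (D <= j)%N ->
  (cnt F n j D * #|F| ^ (D * D) <= 2 ^ j * #|F| ^ (n * D + D * j))%N.
Proof.
have hq : (0 < #|F|)%N by apply/card_gt0P; exists 0.
have cntle : forall j D, (cnt F n j D <= #|F| ^ (j * n))%N.
  by move=> j' D'; rewrite /cnt; apply: leq_trans (max_card _) _; rewrite card_mx.
elim: j D => [|j IH] D hD.
  rewrite leqn0 in hD; move/eqP: hD => ->; rewrite !muln0 addn0 expn0 muln1 mul1n.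
  by apply: leq_trans (cntle 0%N 0%N) _; rewrite mul0n expn0.
case: (leqP D j) => hDj; last first.
  have eD : D = j.+1 by apply/eqP; rewrite eqn_leq hD hDj.
  subst D; apply: (@leq_trans (#|F| ^ (j.+1 * n) * #|F| ^ (j.+1 * j.+1))).
    by rewrite leq_mul2r (cntle j.+1 j.+1) orbT.
  rewrite -expnD -[X in (X <= _)%N]mul1n; apply: leq_mul; first by rewrite expn_gt0.
  rewrite leq_pexp2l //; nia.
have hrec := cnt_rec F n j D; rewrite add1n in hrec.
apply: leq_trans (leq_mul hrec (leqnn _)) _.
rewrite mulnDl expnS mul2n -addnn mulnDl.
apply: leq_add.
  rewrite -mulnA.
  apply: leq_trans (leq_mul (leqnn (#|F| ^ D)) (IH D hDj)) _.
  rewrite mulnCA -expnD leq_mul2l leq_pexp2l // ?orbT //; nia.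
clear hrec; case: D hD hDj => [|D'] hD hDj.
  by rewrite eq_card0 ?muln0 ?mul0n // => A; rewrite inE ltn0.
have -> : #|[set A : 'M[F]_(j, n) | (\rank A < D'.+1)%N]| = cnt F n j D'.
  by apply: eq_card => A; rewrite !inE ltnS.
have hD' : (D' <= j)%N by apply: ltnW.
have e : (D'.+1 * D'.+1 = D' * D' + (D'.*2.+1))%N by rewrite -addnn; nia.
rewrite e expnD.
have -> : forall x y z w : nat, (x * y * (z * w) = (y * z) * (x * w))%N.
  by move=> x y z w; nia.
apply: leq_trans (leq_mul (IH D' hD') (leqnn _)) _.
rewrite -mulnA -!expnD leq_mul2l leq_pexp2l // ?orbT //.
rewrite -addnn; nia.
Qed.

Definition flatb (F : finFieldType) n m (T : {set 'rV[F]_n}) : bool :=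
  [exists x : 'rV[F]_n, exists L : 'M[F]_n,
     (\rank L <= m)%N && (T \subset affine_sub x L)].

Lemma bad_count (F : finFieldType) n m r : (0 < r)%N ->
  (#|[set T : {set 'rV[F]_n} | (#|T| == r) && flatb m T]| <=
   #|F| ^ n * cnt F n r.-1 m)%N.
Proof.
move=> r0.
pose f (T : {set 'rV[F]_n}) := (nth 0 (enum T) 0,
  \matrix_(i < r.-1) (nth 0 (enum T) i.+1 - nth 0 (enum T) 0)).
rewrite -(card_in_imset (f := f)); last first.
  move=> T1 T2; rewrite !inE => /andP[/eqP h1 _] /andP[/eqP h2 _] [e0 eM].
  have es : enum T1 = enum T2.
    apply: (@eq_from_nth _ 0); first by rewrite -!cardE h1 h2.
    move=> i; rewrite -cardE h1 => hi.
    case: i hi => [|i] hi; first exact: e0.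
    have hi' : (i < r.-1)%N by lia.
    have := congr1 (row (Ordinal hi')) eM.
    rewrite /= !rowK e0 => h.
    have := congr1 (fun v => v + nth 0 (enum T2) 0) h.
    by rewrite !subrK.
  by apply/setP => x; rewrite -(mem_enum T1) es mem_enum.
apply: (@leq_trans #|setX [set: 'rV[F]_n] [set M : 'M[F]_(r.-1, n) | (\rank M <= m)%N]|).
  apply: subset_leq_card; apply/subsetP => u /imsetP [T].
  rewrite inE => /andP [/eqP hT /existsP [x /existsP [L /andP [hL hsub]]]] ->.
  rewrite !inE /=.
  apply: leq_trans hL; apply: mxrankS; apply/row_subP => i; rewrite rowK.
  have mem : forall j, (j < r)%N -> (nth 0 (enum T) j - x <= L)%MS.
    move=> j hj; have : nth 0 (enum T) j \in T by rewrite -mem_enum mem_nth // -cardE hT.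
    by move/(subsetP hsub); rewrite inE.
  have -> : nth 0 (enum T) i.+1 - nth 0 (enum T) 0 =
     (nth 0 (enum T) i.+1 - x) + - (nth 0 (enum T) 0 - x).
    by rewrite opprB addrA subrK.
  apply: addmx_sub; first by apply: mem; have := ltn_ord i; lia.
  by rewrite eqmx_opp; apply: mem.
by rewrite cardsX cardsT card_mx mul1n.
Qed.

Lemma exp_mono a b e : (a <= b)%N -> (a ^ e <= b ^ e)%N.
Proof. by move=> h; elim: e => // e IH; rewrite !expnS leq_mul. Qed.

Lemma bin_ineq N s r : (r <= s)%N ->
  ('C(N - r, s - r) * (N - r) ^ r <= 'C(N, s) * s ^ r)%N.
Proof.
elim: r => [|r IH] hr; first by rewrite !subn0 !expn0 !muln1.
have hr' : (r <= s)%N by apply: ltnW.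
have e := mul_bin_diag (N - r) (s - r.+1).
rewrite -subnS subnSK // in e.
apply: (@leq_trans ('C(N - r.+1, s - r.+1) * (N - r) * (N - r) ^ r)%N).
  rewrite -mulnA leq_mul2l expnS; apply/orP; right.
  by apply: leq_mul; [apply: leq_sub2l | apply: exp_mono; apply: leq_sub2l].
rewrite (mulnC _ (N - r)%N) e -mulnA.
apply: (@leq_trans ((s - r) * ('C(N, s) * s ^ r))%N); first by rewrite leq_mul2l IH ?orbT.
by rewrite expnS [X in (_ <= X)%N]mulnCA leq_mul2r leq_subr orbT.
Qed.

Lemma supersets (T : finType) (X : {set T}) r s : #|X| = r ->
  (#|[set S : {set T} | (#|S| == s) && (X \subset S)]| * (#|T| - r) ^ r <=
   'C(#|T|, s) * s ^ r)%N.
Proof.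
move=> hX.
case: (leqP r s) => hrs; last first.
  rewrite eq_card0 ?mul0n // => S; rewrite inE; apply/negP => /andP [/eqP hS sub].
  by have := subset_leq_card sub; rewrite hS hX leqNgt hrs.
apply: leq_trans (bin_ineq _ hrs); rewrite leq_mul2r; apply/orP; right.
rewrite -(card_in_imset (f := fun S => S :\: X)); last first.
  move=> S1 S2; rewrite !inE => /andP [_ h1] /andP [_ h2] e.
  apply/setP => x; case hx: (x \in X).
    by rewrite (subsetP h1 _ hx) (subsetP h2 _ hx).
  have := congr1 (fun A : {set T} => x \in A) e.
  by rewrite /= !inE hx.
have <- : #|~: X| = (#|T| - r)%N by rewrite -hX -(cardsC X) addKn.
rewrite -cards_draws; apply: subset_leq_card; apply/subsetP => A /imsetP [S].
rewrite inE => /andP [/eqP hS sub] ->.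
rewrite inE; apply/andP; split; first by rewrite setDE subsetIr.
by rewrite cardsD (setIidPr sub) hS hX.
Qed.

Lemma exists_good (F : finFieldType) n m r s : (0 < r)%N -> (s <= #|F| ^ n)%N ->
  (#|F| ^ n * cnt F n r.-1 m * s ^ r < (#|F| ^ n - r) ^ r)%N ->
  exists S : {set 'rV[F]_n}, #|S| = s /\
    forall T : {set 'rV[F]_n}, T \subset S -> #|T| = r -> ~~ flatb m T.
Proof.
move=> r0 sN hyp.
have cardV : #|'rV[F]_n| = (#|F| ^ n)%N by rewrite card_mx mul1n.
pose BadT := [set T : {set 'rV[F]_n} | (#|T| == r) && flatb m T].
pose Bad := \bigcup_(T in BadT) [set S : {set 'rV[F]_n} | (#|S| == s) && (T \subset S)].
have hB : (#|Bad| * (#|F| ^ n - r) ^ r <= #|BadT| * ('C(#|F| ^ n, s) * s ^ r))%N.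
  apply: leq_trans (leq_mul (card_big_setU _ _ _) (leqnn _)) _.
  rewrite big_distrl /= -sum_nat_const; apply: leq_sum => T.
  rewrite inE => /andP [/eqP hT _].
  by have := supersets s hT; rewrite cardV.
have Cpos : (0 < 'C(#|F| ^ n, s))%N by rewrite bin_gt0.
have hlt : (#|Bad| < 'C(#|F| ^ n, s))%N.
  have pos : (0 < (#|F| ^ n - r) ^ r)%N by apply: leq_ltn_trans hyp.
  rewrite -(ltn_pmul2r pos); apply: leq_ltn_trans hB _.
  apply: (@leq_ltn_trans ('C(#|F| ^ n, s) * (#|F| ^ n * cnt F n r.-1 m * s ^ r))%N).
    rewrite [X in (X <= _)%N]mulnCA leq_mul2l; apply/orP; right.
    rewrite leq_mul2r; apply/orP; right; exact: bad_count.
  by rewrite ltn_pmul2l.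
have : ~~ ([set S : {set 'rV[F]_n} | #|S| == s] \subset Bad).
  apply/negP => /subset_leq_card; rewrite card_draws cardV.
  by rewrite leqNgt hlt.
case/subsetPn => S; rewrite inE => /eqP hS hSB.
exists S; split => // T hTS hT; apply/negP => fl.
move/negP: hSB; apply; apply/bigcupP; exists T.
  by rewrite inE hT eqxx.
by rewrite inE hS eqxx.
Qed.

Lemma expid d k r : (2 <= k)%N -> (k + 2 <= d)%N -> (1 <= r)%N ->
  ((d - 1) + ((d - 1) * (k - 1) + (k - 1) * r.-1) + (d - k) * r + k =
   (d - 1) * r + (k - 1) * (k - 1) + k * (d - k + 1))%N.
Proof.
move=> h1 h2 h3.
have [t ->] : exists t, d = (k + 2 + t)%N by exists (d - (k + 2))%N; lia.
have [u ->] : exists u, k = (u + 2)%N by exists (k - 2)%N; lia.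
have [v ->] : exists v, r = (v + 1)%N by exists (r - 1)%N; lia.
have -> : (u + 2 + 2 + t - 1 = u + t + 3)%N by lia.
have -> : (u + 2 - 1 = u + 1)%N by lia.
have -> : ((v + 1).-1 = v)%N by lia.
have -> : (u + 2 + 2 + t - (u + 2) = t + 2)%N by lia.
nia.
Qed.

Lemma AC1 (a b c d e f : nat) : (a * b * c * (d * e * f) = (a * f) * (b * d) * (c * e))%N.
Proof. nia. Qed.
Lemma AC2 (a b c d e : nat) : (a * b * (c * d) * e = (b * c) * (a * d * e))%N.
Proof. nia. Qed.
Lemma AC3 (a b c d : nat) : (a * b * c * d = b * (c * d * a))%N.
Proof. nia. Qed.

Unset Implicit Arguments.

Theorem lemma6 (R : realType) (d k : nat) (eps : R) :
  (2 <= k)%N -> (k <= d - 2)%N -> 0 < eps < 1 ->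
  exists p0 : nat, (0 < p0)%N /\
    forall p : nat, prime p -> (p0 <= p)%N ->
      exists S : {set 'rV['F_p]_(d - 1)},
        (p%:R `^ ((d - k)%:R - eps) / 2 <= (#|S|%:R : R)) /\
        forall A : {set 'rV['F_p]_(d - 1)},
          is_affine_subspace_dim (k - 1) A ->
          (#|A :&: S|%:Z <= Num.ceil ((k * (d - k + 1))%:R / eps) - 1)%R.
Proof.
move=> hk hkd /andP [e0 e1].
have hkd' : (k + 2 <= d)%N by lia.
set K := (k * (d - k + 1))%N.
have kK : (k <= K)%N by rewrite /K leq_pmulr // addn1.
have Kpos : (0 < K)%N by apply: leq_trans kK; clear -hk; lia.
have [r Hr] : exists r : nat, Num.ceil (K%:R / eps) = r%:Z.
  exists `|Num.ceil (K%:R / eps)|%N; rewrite gez0_abs // ceil_ge0.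
  apply: (@lt_le_trans _ _ 0); first by rewrite ltrN10.
  by rewrite divr_ge0 // ltW.
have hrR : K%:R / eps <= r%:R :> R.
  by have := ceil_ge (K%:R / eps); rewrite Hr -pmulrn.
have hKr : K%:R <= eps * r%:R :> R.
  by rewrite mulrC -ler_pdivrMr.
have hrK : (K <= r)%N.
  rewrite -(ler_nat R); apply: le_trans hKr _.
  by rewrite ler_piMl // ltW.
have hkr : (k <= r)%N by apply: leq_trans hrK.
have r0 : (0 < r)%N by clear -hkr hk; lia.
exists (4 ^ r)%N; split; first by rewrite expn_gt0.
move=> p pp hp.
have p2 : (2 <= p)%N by apply: prime_gt1.
have p0 : (0 < p)%N by clear -p2; lia.
set P := (p%:R : R) `^ ((d - k)%:R - eps).
have p1R : 1 <= (p%:R : R) by rewrite ler1n; clear -p2; lia.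
have P2 : 2 <= P.
  have : (p%:R : R) `^ 1 <= P.
    apply: ler_powR => //.
    have : 2 <= (d - k)%:R :> R by rewrite ler_nat; clear -hkd'; lia.
    lra.
  rewrite powRr1 ?ler0n //; apply: le_trans; by rewrite ler_nat.
have P0 : 0 <= P by lra.
set s := Num.truncn P.
have hsP : s%:R <= P by rewrite truncn_le.
have hPs : P < s%:R + 1 by have := truncnS_gt P; rewrite -/s -addn1 natrD.
have half : P / 2 <= s%:R by lra.
have mainR : (s ^ r * p ^ K <= p ^ ((d - k) * r))%N.
  rewrite -(ler_nat R) natrM !natrX.
  apply: (@le_trans _ _ (P ^+ r * p%:R ^+ K)).
    rewrite ler_wpM2r ?exprn_ge0 ?ler0n //.
    by apply: lerXn2r; rewrite ?nnegrE ?ler0n.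
  rewrite -!powR_mulrn ?ler0n // -powRrM -powRD; last by apply/implyP => _; rewrite pnatr_eq0; clear -p0; lia.
  apply: ler_powR => //.
  rewrite natrM.
  have : (d - k)%:R * r%:R - eps * r%:R + K%:R <= (d - k)%:R * r%:R :> R by lra.
  by rewrite mulrBl.
have sle : (s <= p ^ (d - 1))%N.
  have : (s ^ r <= (p ^ (d - k)) ^ r)%N.
    rewrite -expnM; apply: (leq_trans _ mainR); apply: leq_pmulr; by rewrite expn_gt0 p0.
  rewrite leq_exp2r // => h; apply: (leq_trans h); apply: leq_pexp2l => //.
  clear -hk; lia.
have hle : (k - 1 <= r.-1)%N by clear -hkr; lia.
have hc := @cnt_bound 'F_p (d - 1) r.-1 (k - 1) hle.
rewrite card_Fp // in hc.
have e22 : (4 ^ r = 2 ^ r * 2 ^ r)%N by rewrite -expnMn.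
have r2r : (r < 2 ^ r)%N by apply: ltn_expl.
have p1 : (p <= p ^ (d - 1))%N.
  by rewrite -[X in (X <= _)%N]expn1; apply: leq_pexp2l => //; clear -hkd' hk; lia.
have pk : (p <= p ^ k)%N.
  by rewrite -[X in (X <= _)%N]expn1; apply: leq_pexp2l => //; clear -hk; lia.
have Nr : (2 * r <= p ^ (d - 1))%N.
  have h2 : (2 <= 2 ^ r)%N by rewrite -[X in (X <= _)%N]expn1; apply: leq_pexp2l => //.
  apply: leq_trans p1; apply: leq_trans hp; rewrite e22.
  by apply: leq_mul => //; apply: ltnW.
have key : (p ^ (d - 1) * cnt 'F_p (d - 1) r.-1 (k - 1) * s ^ r < (p ^ (d - 1) - r) ^ r)%N.
  set c := cnt 'F_p (d - 1) r.-1 (k - 1).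
  set N := (p ^ (d - 1))%N.
  set M := ((k - 1) * (k - 1))%N.
  have Qpos : (0 < p ^ M * p ^ K * 2 ^ r)%N by rewrite !muln_gt0 !expn_gt0 p0.
  rewrite -(ltn_pmul2r Qpos).
  rewrite AC1.
  apply: (@leq_ltn_trans (N * 2 ^ r * (2 ^ r.-1 * p ^ ((d - 1) * (k - 1) + (k - 1) * r.-1)) *
      p ^ ((d - k) * r))%N).
    by apply: leq_mul; [apply: leq_mul|].
  rewrite AC2 /N -!expnD.
  apply: (@leq_trans (p ^ k * p ^ ((d - 1) + ((d - 1) * (k - 1) + (k - 1) * r.-1) + (d - k) * r))%N).
    rewrite ltn_pmul2r ?expn_gt0 ?p0 //.
    apply: leq_trans pk; apply: leq_trans hp; rewrite e22 -expnD.
    by rewrite ltn_exp2l //; clear -r0; lia.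
  rewrite -expnD addnC expid // !expnD.
  rewrite -/N [X in (_ <= X)%N](_ : _ = (2 ^ r * (N - r) ^ r) * p ^ M * p ^ K)%N; last first.
    by rewrite AC3.
  rewrite leq_mul2r; apply/orP; right; rewrite leq_mul2r; apply/orP; right.
  rewrite expnM -expnMn; apply: exp_mono; rewrite -/N; clear -Nr; lia.
have := @exists_good 'F_p (d - 1) (k - 1) r s r0; rewrite card_Fp //.
move=> /(_ sle key) [S [hS good]].
exists S; split; first by rewrite hS.
move=> A [x [L [hL ->]]]; rewrite Hr.
have lt : (#|affine_sub x L :&: S| < r)%N.
  rewrite ltnNge; apply/negP => /card_geqP [s0 [us0 ss0 sub0]].
  pose T := [set y in s0].
  have hT : #|T| = r by rewrite cardsE (card_uniqP us0).
  have TS : T \subset S.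
    by apply/subsetP => y; rewrite inE => /sub0; rewrite inE => /andP [_ ?].
  have := good T TS hT; apply/negP/negPn; apply/existsP; exists x; apply/existsP; exists L.
  rewrite hL leqnn /=; apply/subsetP => y; rewrite inE => /sub0.
  by rewrite inE => /andP [? _].
by rewrite -ltzD1 subrK ltz_nat.
Qed.
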